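(* Let $\mathbf{B}$ be a Mal'cev algebra on a three-element set. Then $\mathbf{B}$ is isomorphic to an algebra $\mathbf{A}$ on $\{0,1,2\}$ with monolith $\mu$ such that one of the following holds: (1) $\mu=1_A$ and every binary relation $R\leq\mathbf{A}^2$ (i.e., $R\in\mathrm{Inv}(\mathbf{A})$, $R\subseteq A^2$) is pp-definable from the unary invariant relations of $\mathbf{A}$ together with $\{\varphi,\psi_2,\psi_0',\psi_1',\psi_2',\varphi_0',\ldots,\varphi_5'\}\cap\mathrm{Inv}(\mathbf{A})$; (2) $\mu=\mu_2$ and every binary relation $R\leq\mathbf{A}^2$ is pp-definable from the unary invariant relations of $\mathbf{A}$ together with $\{\mu_2,\rho_2,\tau_0,\tau_1,\psi_2,\psi_2'\}\cap\mathrm{Inv}(\mathbf{A})$.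
   Context: A Mal'cev algebra has a term $d$ with $d(y,x,x)\approx d(x,x,y)\approx y$. $\mathrm{Inv}(\mathbf{A})$ is the set of relations preserved by all operations of $\mathbf{A}$. The monolith is the least congruence strictly above the equality relation $0_A$ (equal to $1_A=A^2$ if $\mathbf{A}$ is simple). A relation is pp-definable from a set of relations if it is definable by a first-order formula using only those relations, equality, conjunction and existential quantification. Relations on $\{0,1,2\}$: $\mu_i$ is the equivalence relation with classes $\{i\}$ and $\{0,1,2\}\setminus\{i\}$; $\rho_i=\{0,1,2\}^2\setminus\mu_i$; $\psi_i$ is the graph of the transposition fixing $i$ and $\psi_i'$ its restriction to $\{0,1,2\}\setminus\{i\}$ (e.g. $\psi_2=\{(0,1),(1,0),(2,2)\}$, $\psi_2'=\{(0,1),(1,0)\}$); $\varphi=\{(0,1),(1,2),(2,0)\}$; $\varphi_0'=\{(1,2),(2,0)\}$, $\varphi_1'=\{(0,1),(2,0)\}$, $\varphi_2'=\{(0,1),(1,2)\}$, $\varphi_3'=\{(1,2),(0,0)\}$, $\varphi_4'=\{(0,2),(1,1)\}$, $\varphi_5'=\{(0,1),(2,2)\}$; $\tau_0=\{(0,0),(1,0),(2,1)\}$, $\tau_1=\{(0,1),(1,1),(2,0)\}$. *)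

(* Defs.v *)
From mathcomp Require Import all_boot.
Set Implicit Arguments. Unset Strict Implicit. Unset Printing Implicit Defensive.

Section Algebra.
Variables (T : Type) (I : Type) (ar : I -> nat)
          (ops : forall i, ('I_(ar i) -> T) -> T).

Inductive term_op (n : nat) : (('I_n -> T) -> T) -> Prop :=
| term_proj (j : 'I_n) : term_op (fun x => x j)
| term_comp (i : I) (g : 'I_(ar i) -> ('I_n -> T) -> T) :
    (forall k, term_op (g k)) -> term_op (fun x => ops (fun k => g k x)).

Definition t0 : 'I_3 := @Ordinal 3 0 isT.
Definition t1 : 'I_3 := @Ordinal 3 1 isT.
Definition t2 : 'I_3 := @Ordinal 3 2 isT.

(* Mal'cev algebra: a ternary term d with d(y,x,x) = d(x,x,y) = y *)
Definition malcev : Prop :=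
  exists d : ('I_3 -> T) -> T, term_op d /\
    forall x y : T,
      d [fun k : 'I_3 => x with t0 |-> y] = y /\
      d [fun k : 'I_3 => x with t2 |-> y] = y.
End Algebra.

Section OnThree.
Variables (I : Type) (ar : I -> nat)
          (ops : forall i, ('I_(ar i) -> 'I_3) -> 'I_3).

Definition rel3 := {set 'I_3 * 'I_3}.

Definition inv1 (U : {set 'I_3}) : Prop :=
  forall i (x : 'I_(ar i) -> 'I_3), (forall k, x k \in U) -> ops x \in U.
Definition inv2 (S : rel3) : Prop :=
  forall i (x y : 'I_(ar i) -> 'I_3), (forall k, (x k, y k) \in S) ->
    (ops x, ops y) \in S.

Definition diag3 : rel3 := [set p | p.1 == p.2].

Definition is_equiv (S : rel3) : Prop :=
  (forall a, (a, a) \in S) /\ (forall a b, (a, b) \in S -> (b, a) \in S) /\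
  (forall a b c, (a, b) \in S -> (b, c) \in S -> (a, c) \in S).

Definition congruence (S : rel3) : Prop := is_equiv S /\ inv2 S.

Definition is_monolith (mu : rel3) : Prop :=
  [/\ congruence mu, mu != diag3 &
      forall th, congruence th -> th != diag3 -> mu \subset th].
End OnThree.

Definition mu_ (i : 'I_3) : rel3 := [set p | (p.1 == i) == (p.2 == i)].
Definition rho_ (i : 'I_3) : rel3 := ~: mu_ i.
(* the transposition of {0,1,2} fixing i *)
Definition transp (i x : 'I_3) : 'I_3 :=
  if x == i then i else inord (3 - i - x).
Definition psi_ (i : 'I_3) : rel3 := [set p | p.2 == transp i p.1].
Definition psi'_ (i : 'I_3) : rel3 := [set p in psi_ i | p.1 != i].
Definition phi : rel3 := [set (t0, t1); (t1, t2); (t2, t0)].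
Definition phi'0 : rel3 := [set (t1, t2); (t2, t0)].
Definition phi'1 : rel3 := [set (t0, t1); (t2, t0)].
Definition phi'2 : rel3 := [set (t0, t1); (t1, t2)].
Definition phi'3 : rel3 := [set (t1, t2); (t0, t0)].
Definition phi'4 : rel3 := [set (t0, t2); (t1, t1)].
Definition phi'5 : rel3 := [set (t0, t1); (t2, t2)].
Definition tau0 : rel3 := [set (t0, t0); (t1, t0); (t2, t1)].
Definition tau1 : rel3 := [set (t0, t1); (t1, t1); (t2, t0)].
Definition full3 : rel3 := setT.

Inductive ppf : Type :=
| PEq of nat & nat
| P1 of {set 'I_3} & nat
| P2 of rel3 & nat & nat
| PAnd of ppf & ppf
| PEx of nat & ppf.

Fixpoint pp_sat (e : nat -> 'I_3) (f : ppf) : Prop :=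
  match f with
  | PEq x y => e x = e y
  | P1 U x => e x \in U
  | P2 Q x y => (e x, e y) \in Q
  | PAnd f g => pp_sat e f /\ pp_sat e g
  | PEx v f => exists c : 'I_3, pp_sat (fun w => if w == v then c else e w) f
  end.

Fixpoint pp_uses (G1 : {set 'I_3} -> Prop) (G2 : rel3 -> Prop) (f : ppf)
  : Prop :=
  match f with
  | PEq _ _ => True
  | P1 U _ => G1 U
  | P2 Q _ _ => G2 Q
  | PAnd f g => pp_uses G1 G2 f /\ pp_uses G1 G2 g
  | PEx _ f => pp_uses G1 G2 f
  end.

Definition pp_definable (G1 : {set 'I_3} -> Prop) (G2 : rel3 -> Prop)
  (R : rel3) : Prop :=
  exists f, pp_uses G1 G2 f /\ forall e, pp_sat e f <-> (e 0, e 1) \in R.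

(* Main.v *)
Require Import Defs.
From mathcomp Require Import all_boot.
From Stdlib Require Import FunctionalExtensionality Classical.
Set Implicit Arguments. Unset Strict Implicit. Unset Printing Implicit Defensive.

Definition ord3s := [:: t0; t1; t2].
Definition rb := 'I_3 -> 'I_3 -> bool.
Definition tab (b : seq bool) : rb := fun x y => nth false b (3 * x + y).
Definition norm (f : rb) : rb := tab [:: f t0 t0; f t0 t1; f t0 t2; f t1 t0; f t1 t1; f t1 t2;
   f t2 t0; f t2 t1; f t2 t2].
Definition comp (f g : rb) : rb := norm (fun x y => has (fun z => f x z && g z y) ord3s).
Definition conv (f : rb) : rb := fun x y => f y x.
Definition pr1b (f : rb) (x : 'I_3) := has (f x) ord3s.
Definition pr2b (f : rb) (y : 'I_3) := has (fun x => f x y) ord3s.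
Definition prodb (u v : 'I_3 -> bool) : rb := fun x y => u x && v y.
Definition meetb (f g : rb) : rb := fun x y => f x y && g x y.
Definition eqrb (f g : rb) := all (fun x => all (fun y => f x y == g x y) ord3s) ord3s.
Definition subrb (f g : rb) := all (fun x => all (fun y => f x y ==> g x y) ord3s) ord3s.
Definition rectb (f : rb) := all (fun a => all (fun b => all (fun c => all (fun d =>
  (f a c && f a d && f b c) ==> f b d) ord3s) ord3s) ord3s) ord3s.
Definition equivb (f : rb) :=
  all (fun a => f a a) ord3s &&
  all (fun a => all (fun b => f a b ==> f b a) ord3s) ord3s &&
  all (fun a => all (fun b => all (fun c => f a b && f b c ==> f a c) ord3s) ord3s) ord3s.
Definition relL (l : seq (nat * nat)) : rb := fun x y => (val x, val y) \in l.
Definition mub (i : 'I_3) : rb := fun x y => (x == i) == (y == i).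
Definition rho2b : rb := fun x y => ~~ mub t2 x y.
Definition diagb : rb := fun x y => x == y.
Definition fullb : rb := fun _ _ => true.
Definition psi0b := relL [:: (0,0); (1,2); (2,1)].
Definition psi1b := relL [:: (0,2); (1,1); (2,0)].
Definition psi2b := relL [:: (0,1); (1,0); (2,2)].
Definition psi0'b := relL [:: (1,2); (2,1)].
Definition psi1'b := relL [:: (0,2); (2,0)].
Definition psi2'b := relL [:: (0,1); (1,0)].
Definition phib := relL [:: (0,1); (1,2); (2,0)].
Definition phi0b := relL [:: (1,2); (2,0)].
Definition phi1b := relL [:: (0,1); (2,0)].
Definition phi2b := relL [:: (0,1); (1,2)].
Definition phi3b := relL [:: (1,2); (0,0)].
Definition phi4b := relL [:: (0,2); (1,1)].
Definition phi5b := relL [:: (0,1); (2,2)].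
Definition tau0b := relL [:: (0,0); (1,0); (2,1)].
Definition tau1b := relL [:: (0,1); (1,1); (2,0)].

Definition inL1 X := [|| eqrb X phib, eqrb X psi2b, eqrb X psi0'b, eqrb X psi1'b,
  eqrb X psi2'b, eqrb X phi0b, eqrb X phi1b, eqrb X phi2b, eqrb X phi3b,
  eqrb X phi4b | eqrb X phi5b].
Definition inL2 X := [|| eqrb X (mub t2), eqrb X rho2b, eqrb X tau0b, eqrb X tau1b,
  eqrb X psi2b | eqrb X psi2'b].
Definition nomu X := ~~ [|| eqrb X (mub t0), eqrb X (mub t1) | eqrb X (mub t2)].

Definition PP f := prodb (pr1b f) (pr2b f).
Definition isprod f := eqrb f (PP f).
Definition isdiag f := eqrb f (meetb diagb (prodb (pr1b f) (pr1b f))).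
Definition candL (inL : rb -> bool) X f :=
  inL X && (eqrb f (meetb X (PP f)) || eqrb f (meetb (conv X) (PP f))).

Definition cert1 f := [|| isprod f, isdiag f, eqrb f psi0b, eqrb f psi1b,
   candL inL1 f f | candL inL1 (conv f) f].
Definition cert2 f := [|| isprod f, isdiag f, candL inL2 f f, candL inL2 (mub t2) f,
   candL inL2 (comp (comp (mub t2) f) (mub t2)) f, candL inL2 (comp (mub t2) (conv f)) f
   | candL inL2 (comp (mub t2) f) f].

Lemma rb_eta (f : rb) : f = tab [:: f t0 t0; f t0 t1; f t0 t2; f t1 t0; f t1 t1; f t1 t2;
   f t2 t0; f t2 t1; f t2 t2].
Proof.
apply: FunctionalExtensionality.functional_extensionality => x.
apply: FunctionalExtensionality.functional_extensionality => y.
rewrite /tab.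
case: x => [[|[|[|n]]] Hn] //; case: y => [[|[|[|m]]] Hm] //=;
  congr f; exact: val_inj.
Qed.


Fixpoint allbits (n : nat) : seq (seq bool) :=
  if n is n'.+1 then [seq b :: s | b <- [:: true; false], s <- allbits n'] else [:: [::]].

Lemma allbitsP n (s : seq bool) : size s = n -> s \in allbits n.
Proof.
elim: n s => [|n IH] [|b s] //= [Hs].
rewrite cats0 mem_cat; apply/orP; case: b; [left|right];
  apply/mapP; exists s => //; exact: IH.
Qed.

Lemma finall (P : rb -> bool) : all (fun b => P (tab b)) (allbits 9) -> forall f, P f.
Proof.
move=> /allP H f; rewrite (rb_eta f); apply: H; exact: allbitsP.
Qed.

Lemma C1 (f : rb) : rectb f ==> nomu (comp f (conv f)) ==> nomu (comp (conv f) f) ==> cert1 f.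
Proof. move: f; apply: finall; by vm_compute. Qed.

Lemma C2 (f : rb) : rectb f ==> rectb (comp (comp f (conv f)) (mub t2))
  ==> rectb (comp (comp (conv f) f) (mub t2))
  ==> rectb (comp (comp (comp (conv f) (mub t2)) f) (mub t2)) ==> cert2 f.
Proof. move: f; apply: finall; by vm_compute. Qed.

Lemma M1 (g : rb) : equivb g ==> ~~ eqrb g diagb ==> nomu g ==> eqrb g fullb.
Proof. move: g; apply: finall; by vm_compute. Qed.

Lemma M2 (g : rb) : equivb g ==> ~~ eqrb g diagb ==> rectb (comp g (mub t2)) ==> subrb (mub t2) g.
Proof. move: g; apply: finall; by vm_compute. Qed.

Lemma mem3 (x : 'I_3) : x \in ord3s.
Proof. by case: x => [[|[|[|n]]] Hn]. Qed.

Lemma normE f x y : norm f x y = f x y.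
Proof.
rewrite /norm /tab.
case: x => [[|[|[|n]]] Hn] //; case: y => [[|[|[|m]]] Hm] //=; congr f; exact: val_inj.
Qed.

Lemma compE f g x y : comp f g x y = has (fun z => f x z && g z y) ord3s.
Proof. by rewrite /comp normE. Qed.

Lemma eqrbP f g : eqrb f g -> forall x y, f x y = g x y.
Proof.
move=> /allP H x y; move: (H x (mem3 x)) => /allP /(_ y (mem3 y)); by move/eqP.
Qed.

Lemma subrbP f g : subrb f g -> forall x y, f x y -> g x y.
Proof.
move=> /allP H x y; move: (H x (mem3 x)) => /allP /(_ y (mem3 y)); by move/implyP.
Qed.

Definition toS (f : rb) : rel3 := [set p | f p.1 p.2].
Definition toS1 (u : 'I_3 -> bool) : {set 'I_3} := [set x | u x].
Definition ofS (R : rel3) : rb := fun x y => (x, y) \in R.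

Lemma toS_ofS R : toS (ofS R) = R.
Proof. by apply/setP => [[x y]]; rewrite inE. Qed.

Lemma toS_ext f g : (forall x y, f x y = g x y) -> toS f = toS g.
Proof. by move=> H; apply/setP => [[x y]]; rewrite !inE H. Qed.

Section Ops.
Variables (I : Type) (ar : I -> nat) (ops : forall i, ('I_(ar i) -> 'I_3) -> 'I_3).

Definition I2 f := inv2 ops (toS f).
Definition I1 u := inv1 ops (toS1 u).

Lemma I2E f : I2 f <-> forall i x y, (forall k, f (x k) (y k)) -> f (@ops i x) (@ops i y).
Proof.
rewrite /I2 /inv2; split => H i x y Hk.
  by have := H i x y; rewrite inE; apply => k; rewrite inE; exact: Hk.
by rewrite inE; apply: H => k; move: (Hk k); rewrite inE.
Qed.

Lemma I2_ext f g : (forall x y, f x y = g x y) -> I2 f -> I2 g.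
Proof. by move=> H; rewrite /I2 (toS_ext H). Qed.

Lemma I2_conv f : I2 f -> I2 (conv f).
Proof. move=> /I2E H; apply/I2E => i x y Hk; exact: H. Qed.

Lemma I2_comp f g : I2 f -> I2 g -> I2 (comp f g).
Proof.
move=> /I2E Hf /I2E Hg; apply/I2E => i x y Hk.
pose P k := fun z => f (x k) z && g z (y k).
pose z k := nth t0 ord3s (find (P k) ord3s).
have Hz k : P k (z k) by apply: nth_find; move: (Hk k); rewrite compE.
rewrite compE; apply/hasP; exists (@ops i z); first exact: mem3.
apply/andP; split; [apply: Hf | apply: Hg] => k; by case/andP: (Hz k).
Qed.

Lemma I1_pr1 f : I2 f -> I1 (pr1b f).
Proof.
move=> /I2E Hf i x Hk.
have Hk' k : pr1b f (x k) by move: (Hk k); rewrite inE.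
pose y k := nth t0 ord3s (find (f (x k)) ord3s).
have Hy k : f (x k) (y k) by apply: nth_find; exact: Hk'.
rewrite inE; apply/hasP; exists (@ops i y); first exact: mem3.
exact: Hf.
Qed.

Lemma I1_pr2 f : I2 f -> I1 (pr2b f).
Proof. move=> H; exact: (I1_pr1 (I2_conv H)). Qed.

Definition RectAll := forall f, I2 f -> rectb f.

Section PP.
Variables (G1 : {set 'I_3} -> Prop) (G2 : rel3 -> Prop).

Lemma pp_meet (X f : rb) u v : G2 (toS X) -> G1 (toS1 u) -> G1 (toS1 v) ->
  (forall x y, f x y = X x y && (u x && v y)) -> pp_definable G1 G2 (toS f).
Proof.
move=> HX Hu Hv H.
exists (PAnd (P2 (toS X) 0 1) (PAnd (P1 (toS1 u) 0) (P1 (toS1 v) 1))); split => //.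
move=> e /=; rewrite !inE /= H.
split => [[-> [-> ->]] //|/andP[-> /andP[-> ->]] //].
Qed.

Lemma pp_cmeet (X f : rb) u v : G2 (toS X) -> G1 (toS1 u) -> G1 (toS1 v) ->
  (forall x y, f x y = X y x && (u x && v y)) -> pp_definable G1 G2 (toS f).
Proof.
move=> HX Hu Hv H.
exists (PAnd (P2 (toS X) 1 0) (PAnd (P1 (toS1 u) 0) (P1 (toS1 v) 1))); split => //.
move=> e /=; rewrite !inE /= H.
split => [[-> [-> ->]] //|/andP[-> /andP[-> ->]] //].
Qed.

Lemma pp_prod (f : rb) u v : G1 (toS1 u) -> G1 (toS1 v) ->
  (forall x y, f x y = u x && v y) -> pp_definable G1 G2 (toS f).
Proof.
move=> Hu Hv H.
exists (PAnd (P1 (toS1 u) 0) (P1 (toS1 v) 1)); split => //.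
move=> e /=; rewrite !inE /= H.
split => [[-> ->] //|/andP[-> ->] //].
Qed.

Lemma pp_diag (f : rb) u : G1 (toS1 u) ->
  (forall x y, f x y = (x == y) && u x) -> pp_definable G1 G2 (toS f).
Proof.
move=> Hu H.
exists (PAnd (PEq 0 1) (P1 (toS1 u) 0)); split => //.
move=> e /=; rewrite !inE /= H.
split => [[-> ->]|/andP[/eqP -> ->]] //; by rewrite eqxx.
Qed.

Lemma pp_comp2 (Q S f : rb) : G2 (toS Q) -> G2 (toS S) ->
  (forall x y, f x y = comp Q S x y) -> pp_definable G1 G2 (toS f).
Proof.
move=> HQ HS H.
exists (PEx 2 (PAnd (P2 (toS Q) 0 2) (P2 (toS S) 2 1))); split => //.
move=> e /=; rewrite inE H compE.
split => [[c [H1 H2]]|/hasP[c _ /andP[H1 H2]]].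
  apply/hasP; exists c; first exact: mem3.
  by move: H1 H2; rewrite !inE /= => -> ->.
by exists c; rewrite !inE /= H1 H2.
Qed.

End PP.
End Ops.

Lemma inord0 : inord 0 = t0 :> 'I_3. Proof. by apply: val_inj; rewrite /= inordK. Qed.
Lemma inord1 : inord 1 = t1 :> 'I_3. Proof. by apply: val_inj; rewrite /= inordK. Qed.
Lemma inord2 : inord 2 = t2 :> 'I_3. Proof. by apply: val_inj; rewrite /= inordK. Qed.

Ltac ord9 := let x := fresh "x" in let y := fresh "y" in
  apply/setP => [[x y]]; rewrite !inE /= /transp;
  case: x => [[|[|[|?]]] ?] //; case: y => [[|[|[|?]]] ?] //=;
  rewrite ?inord0 ?inord1 ?inord2 //.

Lemma S_mu i : toS (mub i) = mu_ i. Proof. by []. Qed.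
Lemma S_rho2 : toS rho2b = rho_ t2. Proof. by apply/setP => [[x y]]; rewrite !inE. Qed.
Lemma S_psi2 : toS psi2b = psi_ t2. Proof. ord9. Qed.
Lemma S_psi0' : toS psi0'b = psi'_ t0. Proof. ord9. Qed.
Lemma S_psi1' : toS psi1'b = psi'_ t1. Proof. ord9. Qed.
Lemma S_psi2' : toS psi2'b = psi'_ t2. Proof. ord9. Qed.
Lemma S_phi : toS phib = phi. Proof. ord9. Qed.
Lemma S_phi0 : toS phi0b = phi'0. Proof. ord9. Qed.
Lemma S_phi1 : toS phi1b = phi'1. Proof. ord9. Qed.
Lemma S_phi2 : toS phi2b = phi'2. Proof. ord9. Qed.
Lemma S_phi3 : toS phi3b = phi'3. Proof. ord9. Qed.
Lemma S_phi4 : toS phi4b = phi'4. Proof. ord9. Qed.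
Lemma S_phi5 : toS phi5b = phi'5. Proof. ord9. Qed.
Lemma S_tau0 : toS tau0b = tau0. Proof. ord9. Qed.
Lemma S_tau1 : toS tau1b = tau1. Proof. ord9. Qed.

Definition L1s : seq rel3 := [:: phi; psi_ t2; psi'_ t0; psi'_ t1; psi'_ t2;
                             phi'0; phi'1; phi'2; phi'3; phi'4; phi'5].
Definition L2s : seq rel3 := [:: mu_ t2; rho_ t2; tau0; tau1; psi_ t2; psi'_ t2].

Section Cases.
Variables (I : Type) (ar : I -> nat) (ops : forall i, ('I_(ar i) -> 'I_3) -> 'I_3).
Definition G2s (L : seq rel3) := fun Q => Q \in L /\ inv2 ops Q.

Lemma G2_of L X Y Q : I2 ops X -> eqrb X Y -> toS Y = Q -> Q \in L -> G2s L (toS X).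
Proof.
move=> HX /eqrbP /toS_ext E EQ HQ; split; first by rewrite E EQ.
exact: HX.
Qed.

Ltac inl_tac := by rewrite !inE eqxx ?orbT.

Lemma inL1_G2 X : I2 ops X -> inL1 X -> G2s L1s (toS X).
Proof.
move=> HX; rewrite /inL1.
case/orP=> [H|]; first by apply: (G2_of HX H S_phi); inl_tac.
case/orP=> [H|]; first by apply: (G2_of HX H S_psi2); inl_tac.
case/orP=> [H|]; first by apply: (G2_of HX H S_psi0'); inl_tac.
case/orP=> [H|]; first by apply: (G2_of HX H S_psi1'); inl_tac.
case/orP=> [H|]; first by apply: (G2_of HX H S_psi2'); inl_tac.
case/orP=> [H|]; first by apply: (G2_of HX H S_phi0); inl_tac.
case/orP=> [H|]; first by apply: (G2_of HX H S_phi1); inl_tac.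
case/orP=> [H|]; first by apply: (G2_of HX H S_phi2); inl_tac.
case/orP=> [H|]; first by apply: (G2_of HX H S_phi3); inl_tac.
case/orP=> [H|H]; first by apply: (G2_of HX H S_phi4); inl_tac.
by apply: (G2_of HX H S_phi5); inl_tac.
Qed.

Lemma inL2_G2 X : I2 ops X -> inL2 X -> G2s L2s (toS X).
Proof.
move=> HX; rewrite /inL2.
case/orP=> [H|]; first by apply: (G2_of HX H (S_mu t2)); inl_tac.
case/orP=> [H|]; first by apply: (G2_of HX H S_rho2); inl_tac.
case/orP=> [H|]; first by apply: (G2_of HX H S_tau0); inl_tac.
case/orP=> [H|]; first by apply: (G2_of HX H S_tau1); inl_tac.
case/orP=> [H|H]; first by apply: (G2_of HX H S_psi2); inl_tac.
by apply: (G2_of HX H S_psi2'); inl_tac.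
Qed.

Lemma candL_pp (inL : rb -> bool) L X f : I2 ops X -> I2 ops f ->
  (forall Y, I2 ops Y -> inL Y -> G2s L (toS Y)) -> candL inL X f ->
  pp_definable (inv1 ops) (G2s L) (toS f).
Proof.
move=> HX Hf HL /andP[HiX /orP[H|H]].
  apply: (pp_meet (HL _ HX HiX) (I1_pr1 Hf) (I1_pr2 Hf)); exact: eqrbP H.
apply: (pp_cmeet (HL _ HX HiX) (I1_pr1 Hf) (I1_pr2 Hf)); exact: eqrbP H.
Qed.

Lemma base_pp L f : I2 ops f -> isprod f || isdiag f ->
  pp_definable (inv1 ops) (G2s L) (toS f).
Proof.
move=> Hf /orP[H|H].
  apply: (pp_prod _ (I1_pr1 Hf) (I1_pr2 Hf)); exact: eqrbP H.
apply: (pp_diag _ (I1_pr1 Hf)) => x y; rewrite (eqrbP H) /meetb /prodb /diagb.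
by case: eqP => // ->; rewrite andbb.
Qed.

Lemma equivbP g : equivb g -> is_equiv (toS g).
Proof.
case/andP=> [/andP[/allP H1 /allP H2] /allP H3]; split; [|split].
- by move=> a; rewrite inE; exact: H1 (mem3 a).
- move=> a b; rewrite !inE /=; exact/implyP/(allP (H2 a (mem3 a)) b (mem3 b)).
- move=> a b c; rewrite !inE /= => Hab Hbc.
  have := allP (allP (H3 a (mem3 a)) b (mem3 b)) c (mem3 c).
  by rewrite Hab Hbc.
Qed.

Lemma equivbP' R : is_equiv R -> equivb (ofS R).
Proof.
case=> [H1 [H2 H3]]; apply/andP; split; first (apply/andP; split).
- by apply/allP => a _; exact: H1.
- apply/allP => a _; apply/allP => b _; apply/implyP; exact: H2.
- apply/allP => a _; apply/allP => b _; apply/allP => c _; apply/implyP => /andP[];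
  exact: H3.
Qed.


Lemma not_diag R : R != diag3 -> ~~ eqrb (ofS R) diagb.
Proof.
apply: contra => /eqrbP H; apply/eqP; rewrite -(toS_ofS R).
by apply/setP => [[x y]]; rewrite !inE /= H.
Qed.

Hypothesis Hr : RectAll ops.

Lemma case2 : I2 ops (mub t2) ->
  is_monolith ops (mu_ t2) /\
  forall R, inv2 ops R -> pp_definable (inv1 ops) (G2s L2s) R.
Proof.
move=> Hm; split.
  split.
  - split; last exact: Hm.
    by apply: (equivbP (g := mub t2)); vm_compute.
  - apply/eqP => H; have : (t0, t1) \in mu_ t2 by rewrite inE.
    by rewrite H inE.
  - move=> th [Heq Hinv] Hne.
    have Ig : I2 ops (ofS th) by rewrite /I2 toS_ofS.
    have := M2 (ofS th); rewrite equivbP' // not_diag // Hr /=; last exact: I2_comp.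
    move/subrbP => H; apply/subsetP => [[x y]]; rewrite inE /= => Hxy.
    exact: H.
move=> R HR; rewrite -(toS_ofS R); set f := ofS R.
have If : I2 ops f by rewrite /I2 toS_ofS.
have Ic := I2_conv If.
have := C2 f.
rewrite Hr // Hr; last by apply: I2_comp => //; exact: I2_comp.
rewrite Hr; last by apply: I2_comp => //; exact: I2_comp.
rewrite Hr /=; last by apply: I2_comp => //; apply: I2_comp => //; exact: I2_comp.
rewrite /cert2.
case/orP=> [H|]; first by apply: base_pp => //; rewrite H.
case/orP=> [H|]; first by apply: base_pp => //; rewrite H orbT.
case/orP=> [H|]; first by apply: (candL_pp If If inL2_G2 H).
case/orP=> [H|]; first by apply: (candL_pp Hm If inL2_G2 H).
case/orP=> [H|].
  apply: (candL_pp _ If inL2_G2 H); by apply: I2_comp => //; exact: I2_comp.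
case/orP=> [H|H].
  apply: (candL_pp _ If inL2_G2 H); by apply: I2_comp.
apply: (candL_pp _ If inL2_G2 H); by apply: I2_comp.
Qed.

Lemma case1 : (forall j, ~ I2 ops (mub j)) ->
  (I2 ops psi0b \/ I2 ops psi1b -> I2 ops psi2b) ->
  is_monolith ops full3 /\
  forall R, inv2 ops R -> pp_definable (inv1 ops) (G2s L1s) R.
Proof.
move=> Hnm Hpsi.
have nomuP X : I2 ops X -> nomu X.
  move=> HX; apply/negP => /or3P[] H; [apply: (Hnm t0)|apply: (Hnm t1)|apply: (Hnm t2)];
  apply: I2_ext HX; exact: eqrbP.
split.
  split.
  - split; last by move=> i x y _; rewrite inE.
    by split; [|split] => *; rewrite inE.
  - apply/eqP => H; have : (t0, t1) \in full3 by rewrite inE.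
    by rewrite H inE.
  - move=> th [Heq Hinv] Hne.
    have Ig : I2 ops (ofS th) by rewrite /I2 toS_ofS.
    have := M1 (ofS th); rewrite equivbP' // not_diag // nomuP //=.
    move/eqrbP => H; apply/subsetP => [[x y]] _.
    by rewrite -(toS_ofS th) inE /= H.
move=> R HR; rewrite -(toS_ofS R); set f := ofS R.
have If : I2 ops f by rewrite /I2 toS_ofS.
have Ic := I2_conv If.
have := C1 f.
rewrite Hr // !nomuP /=; [|exact: I2_comp|exact: I2_comp].
rewrite /cert1.
case/orP=> [H|]; first by apply: base_pp => //; rewrite H.
case/orP=> [H|]; first by apply: base_pp => //; rewrite H orbT.
case/orP=> [H|].
  have I0 : I2 ops psi0b by apply: I2_ext If; exact: eqrbP.
  have I2' := Hpsi (or_introl I0).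
  have Iphi : I2 ops phib by apply: I2_ext (I2_comp I0 I2'); apply: eqrbP; vm_compute.
  apply: (@pp_comp2 _ _ phib psi2b).
  - apply: (G2_of Iphi (Y := phib)) S_phi _; [by vm_compute|inl_tac].
  - apply: (G2_of I2' (Y := psi2b)) S_psi2 _; [by vm_compute|inl_tac].
  - by move=> x y; rewrite (eqrbP H); apply: eqrbP; vm_compute.
case/orP=> [H|].
  have I1 : I2 ops psi1b by apply: I2_ext If; exact: eqrbP.
  have I2' := Hpsi (or_intror I1).
  have Iphi : I2 ops phib by apply: I2_ext (I2_comp I2' I1); apply: eqrbP; vm_compute.
  apply: (@pp_comp2 _ _ psi2b phib).
  - apply: (G2_of I2' (Y := psi2b)) S_psi2 _; [by vm_compute|inl_tac].
  - apply: (G2_of Iphi (Y := phib)) S_phi _; [by vm_compute|inl_tac].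
  - by move=> x y; rewrite (eqrbP H); apply: eqrbP; vm_compute.
case/orP=> [H|H]; first by apply: (candL_pp If If inL1_G2 H).
by apply: (candL_pp Ic If inL1_G2 H).
Qed.
End Cases.

Definition sw (i x : 'I_3) : 'I_3 := if x == i then t2 else if x == t2 then i else x.
Lemma swK i : involutive (sw i).
Proof.
move=> x; apply: val_inj; rewrite /sw.
by case: i => [[|[|[|?]]] ?] //; case: x => [[|[|[|?]]] ?].
Qed.

Definition pre (p : 'I_3 -> 'I_3) (f : rb) : rb := fun x y => f (p x) (p y).
Definition psib i := pre (sw i) psi2b.

Lemma pre_mu2 j : eqrb (pre (sw j) (mub t2)) (mub j).
Proof. by case: j => [[|[|[|?]]] ?] //; vm_compute. Qed.
Lemma pre_mu i j : eqrb (pre (sw i) (mub j)) (mub (sw i j)).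
Proof. by case: i => [[|[|[|?]]] ?] //; case: j => [[|[|[|?]]] ?] //; vm_compute. Qed.
Lemma pre_psi0 : eqrb (pre (sw t2) psi0b) (psib t0). Proof. by vm_compute. Qed.
Lemma pre_psi1 : eqrb (pre (sw t2) psi1b) (psib t1). Proof. by vm_compute. Qed.

Section Conj.
Variables (I : Type) (ar : I -> nat) (ops : forall i, ('I_(ar i) -> 'I_3) -> 'I_3).
Variable (p : 'I_3 -> 'I_3) (pK : involutive p).
Definition conjo : forall i, ('I_(ar i) -> 'I_3) -> 'I_3 :=
  fun i x => p (@ops i (fun k => p (x k))).

Lemma transfer f : I2 conjo f <-> I2 ops (pre p f).
Proof.
split => /I2E H; apply/I2E => i x y Hk.
  have := H i (fun k => p (x k)) (fun k => p (y k)) Hk.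
  rewrite /conjo /pre.
  have E z : (fun k => p (p (z k))) = z :> ('I_(ar i) -> 'I_3).
    by apply: functional_extensionality => k; rewrite pK.
  by rewrite !E.
apply: H => k; rewrite /pre !pK; exact: Hk.
Qed.
End Conj.

Lemma malcev_rect (B : Type) (I : Type) (ar : I -> nat)
  (opsB : forall i, ('I_(ar i) -> B) -> B)
  (opsA : forall i, ('I_(ar i) -> 'I_3) -> 'I_3) (h : B -> 'I_3) (hinv : 'I_3 -> B) :
  cancel hinv h ->
  (forall i x, h (opsB i x) = opsA i (fun k => h (x k))) -> malcev opsB -> RectAll opsA.
Proof.
move=> hK Hh [d [Hd Hid]] f /I2E If.
have Hterm n (t : ('I_n -> B) -> B) : term_op opsB t -> forall x y,
    (forall k, f (h (x k)) (h (y k))) -> f (h (t x)) (h (t y)).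
  elim=> [j|i g _ IH] x y Hxy /=; first exact: Hxy.
  rewrite !Hh; apply: If => k; exact: IH.
apply/allP => a _; apply/allP => b _; apply/allP => c _; apply/allP => e _.
apply/implyP => /andP[/andP[Hac Hae] Hbc].
have := Hterm 3 d Hd [fun k => hinv a with t0 |-> hinv b] [fun k => hinv c with t2 |-> hinv e].
case: (Hid (hinv a) (hinv b)) => -> _; case: (Hid (hinv c) (hinv e)) => _ ->.
rewrite !hK; apply => k /=.
by case: k => [[|[|[|?]]] ?] //=; rewrite !hK.
Qed.

Unset Implicit Arguments.

Theorem lemma4p4 (B : finType) (I : Type) (ar : I -> nat)
  (opsB : forall i, ('I_(ar i) -> B) -> B) :
  #|B| = 3 -> malcev opsB ->
  exists (opsA : forall i, ('I_(ar i) -> 'I_3) -> 'I_3) (h : B -> 'I_3),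
    bijective h /\
    (forall i (x : 'I_(ar i) -> B), h (opsB i x) = opsA i (fun k => h (x k))) /\
    ((is_monolith opsA full3 /\
      forall R : rel3, inv2 opsA R ->
        pp_definable (inv1 opsA)
          (fun Q => Q \in [:: phi; psi_ t2; psi'_ t0; psi'_ t1; psi'_ t2;
                             phi'0; phi'1; phi'2; phi'3; phi'4; phi'5]
                    /\ inv2 opsA Q) R)
     \/
     (is_monolith opsA (mu_ t2) /\
      forall R : rel3, inv2 opsA R ->
        pp_definable (inv1 opsA)
          (fun Q => Q \in [:: mu_ t2; rho_ t2; tau0; tau1; psi_ t2; psi'_ t2]
                    /\ inv2 opsA Q) R)).
Proof.
move=> HB Hm.
pose h0 (b : B) : 'I_3 := cast_ord HB (enum_rank b).
pose h0inv (i : 'I_3) : B := enum_val (cast_ord (esym HB) i).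
have h0K : cancel h0 h0inv by move=> b; rewrite /h0 /h0inv cast_ordK enum_rankK.
have h0invK : cancel h0inv h0 by move=> i; rewrite /h0 /h0inv enum_valK cast_ordKV.
pose ops0 i (x : 'I_(ar i) -> 'I_3) := h0 (opsB i (fun k => h0inv (x k))).
have Hgen (j : 'I_3) : bijective (sw j \o h0) /\
    (forall i (x : 'I_(ar i) -> B), (sw j \o h0) (opsB i x) =
        @conjo _ _ ops0 (sw j) i (fun k => (sw j \o h0) (x k))) /\
    RectAll (conjo ops0 (sw j)).
  have hom : forall i (x : 'I_(ar i) -> B), (sw j \o h0) (opsB i x) =
        @conjo _ _ ops0 (sw j) i (fun k => (sw j \o h0) (x k)).
    move=> i x; rewrite /conjo /ops0 /=; congr (sw j (h0 (opsB i _))).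
    by apply: functional_extensionality => k; rewrite swK h0K.
  split; last split => //.
    by exists (h0inv \o sw j) => x /=; rewrite ?swK ?h0K ?h0invK ?swK.
  apply: (malcev_rect (hinv := h0inv \o sw j) _ hom Hm).
  by move=> x /=; rewrite h0invK swK.
case: (classic (exists j, I2 ops0 (mub j))) => [[j Hj]|Hnj].
  have [Hb [Hh Hr]] := Hgen j.
  exists (conjo ops0 (sw j)), (sw j \o h0); split => //; split => //; right.
  apply: (case2 Hr); apply/(transfer _ (swK j)).
  apply: I2_ext Hj => x y; symmetry; exact: (eqrbP (pre_mu2 j)).
have Hnomu (j : 'I_3) : forall l, ~ I2 (conjo ops0 (sw j)) (mub l).
  move=> l /(transfer _ (swK j)) H; apply: Hnj; exists (sw j l).
  apply: I2_ext H; exact: eqrbP (pre_mu j l).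
case: (classic (exists i, I2 ops0 (psib i))) => [[i Hi]|Hni].
  have [Hb [Hh Hr]] := Hgen i.
  exists (conjo ops0 (sw i)), (sw i \o h0); split => //; split => //; left.
  apply: (case1 Hr (Hnomu i)) => _; exact/(transfer _ (swK i)).
have [Hb [Hh Hr]] := Hgen t2.
exists (conjo ops0 (sw t2)), (sw t2 \o h0); split => //; split => //; left.
apply: (case1 Hr (Hnomu t2)) => -[] /(transfer _ (swK t2)) H; exfalso; apply: Hni.
  by exists t0; apply: I2_ext H; exact: eqrbP pre_psi0.
by exists t1; apply: I2_ext H; exact: eqrbP pre_psi1.
Qed.
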